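(* Let $G$ be a graph that has a proper VPG-representation $R_V$ in a $w\times h$-grid. Then every subgraph $G'$ of $G$ has an EPG-representation $R_E$ in a $2w\times 2h$-grid. Furthermore, if every vertex-path of $R_V$ is $x$-monotone, then $R_E$ can be chosen so that every vertex-path of $R_E$ is $x$-monotone.
   Context: The $w\times h$-grid consists of all grid-points $(i,j)$ with integer coordinates $1\le i\le w$, $1\le j\le h$, and all grid-edges joining grid-points at distance $1$. A vertex-path is a path in the grid. An EPG-representation of a graph $G$ assigns to each vertex $v$ a vertex-path $\mathrm{path}(v)$ such that $(v,w)$ is an edge of $G$ if and only if $\mathrm{path}(v)$ and $\mathrm{path}(w)$ share a grid-edge. A VPG-representation of $G$ assigns to each vertex a vertex-path such that $(v,w)$ is an edge if and only if $\mathrm{path}(v)$ and $\mathrm{path}(w)$ share a grid-point. A VPG-representation is proper if (a) every grid-edge is used by at most one vertex-path, and (b) whenever a grid-point $p$ belongs to both $\mathrm{path}(v)$ and $\mathrm{path}(w)$ ($v\neq w$), one of these two vertex-paths contains the grid-edge going rightward from $p$ and the other contains the grid-edge going upward from $p$. A vertex-path is $x$-monotone if every vertical line meeting it meets it in a single interval. *)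

(* Defs.v *)
From mathcomp Require Import all_boot.
Set Implicit Arguments. Unset Strict Implicit. Unset Printing Implicit Defensive.

(* Grid points are pairs (i, j) of naturals; point (i,j) has x = i, y = j. *)
Definition point := (nat * nat)%type.

Definition in_grid (w h : nat) (p : point) : bool :=
  (0 < p.1 <= w) && (0 < p.2 <= h).

Definition gadj (p q : point) : bool :=
  ((p.1 == q.1) && ((p.2 == q.2.+1) || (q.2 == p.2.+1))) ||
  ((p.2 == q.2) && ((p.1 == q.1.+1) || (q.1 == p.1.+1))).

Definition grid_path (w h : nat) (P : seq point) : Prop :=
  [/\ P <> [::], uniq P, all (in_grid w h) P &
      all (fun ab : point * point => gadj ab.1 ab.2) (zip P (behead P))].

Definition has_edge (P : seq point) (p q : point) : bool :=
  has (fun ab : point * point =>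
         ((ab.1 == p) && (ab.2 == q)) || ((ab.1 == q) && (ab.2 == p)))
      (zip P (behead P)).

Definition share_edge (P Q : seq point) : Prop :=
  exists p q : point, [/\ gadj p q, has_edge P p q & has_edge Q p q].

Definition share_point (P Q : seq point) : Prop :=
  exists p : point, p \in P /\ p \in Q.

Definition EPG_rep (w h : nat) (V : finType) (e : rel V) (R : V -> seq point) : Prop :=
  (forall v, grid_path w h (R v)) /\
  (forall v u, v != u -> (e v u <-> share_edge (R v) (R u))).

Definition VPG_rep (w h : nat) (V : finType) (e : rel V) (R : V -> seq point) : Prop :=
  (forall v, grid_path w h (R v)) /\
  (forall v u, v != u -> (e v u <-> share_point (R v) (R u))).

Definition right_of (p : point) : point := (p.1.+1, p.2).
Definition up_of (p : point) : point := (p.1, p.2.+1).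

Definition proper_VPG (V : finType) (R : V -> seq point) : Prop :=
  (forall v u, v != u -> forall p q : point, gadj p q ->
       ~ (has_edge (R v) p q /\ has_edge (R u) p q)) /\
  (forall v u, v != u -> forall p : point, p \in R v -> p \in R u ->
       (has_edge (R v) p (right_of p) && has_edge (R u) p (up_of p)) \/
       (has_edge (R v) p (up_of p) && has_edge (R u) p (right_of p))).

(* x-monotone: every vertical line x = c meets the path in a single interval,
   i.e. the points of the path with x-coordinate c are consecutive along it. *)
Definition x_monotone (P : seq point) : Prop :=
  forall (c i j k : nat), i <= j -> j <= k -> k < size P ->
    (nth (0, 0) P i).1 = c -> (nth (0, 0) P k).1 = c -> (nth (0, 0) P j).1 = c.

(* Main.v *)
Require Import Defs.
From mathcomp Require Import all_boot zify.
Set Implicit Arguments. Unset Strict Implicit. Unset Printing Implicit Defensive.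


Definition pairs {T : Type} (s : seq T) := zip s (behead s).

Lemma pairs_cat {T : Type} (s1 s2 : seq T) :
  pairs (s1 ++ s2) = pairs s1 ++
    (if s1 is x :: s1' then (if s2 is y :: _ then [:: (last x s1', y)] else [::]) else [::])
    ++ pairs s2.
Proof.
elim: s1 => [|x s1 IH] //=.
case: s1 IH => [|z s1] IH /=.
  by case: s2 {IH}.
by rewrite /pairs /= in IH *; rewrite IH.
Qed.

Lemma pairs_map {T U : Type} (f : T -> U) s :
  pairs (map f s) = map (fun p => (f p.1, f p.2)) (pairs s).
Proof.
elim: s => [|x s IH] //=. case: s IH => [|y s] IH //=.
by rewrite /pairs /= in IH *; rewrite IH.
Qed.

Lemma pairs_mem {T : eqType} (s : seq T) a b : (a, b) \in pairs s -> a \in s /\ b \in s.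
Proof.
elim: s => [|x s IH] //=. case: s IH => [|y s] IH //=.
rewrite /pairs /= in IH *. rewrite in_cons => /orP [/eqP [-> ->]|/IH [h1 h2]].
  by split; rewrite !inE eqxx ?orbT.
by split; rewrite in_cons; apply/orP; right.
Qed.

Lemma pairs_index {T : eqType} (s : seq T) a b : uniq s -> (a, b) \in pairs s ->
  index b s = (index a s).+1.
Proof.
elim: s => [|x s IH] //=. case: s IH => [|y s] IH //=.
rewrite /pairs /= in IH *. move=> /andP [xn un]. rewrite in_cons => /orP [/eqP [-> ->]|h].
  rewrite !eqxx; case: eqP => // exy; by move: xn; rewrite exy inE eqxx.
have [h1 h2] := pairs_mem (s := y :: s) h.
have ax : x != a by apply/eqP => e; move: xn; rewrite e h1.
have bx : x != b by apply/eqP => e; move: xn; rewrite e h2.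
by rewrite (negbTE ax) (negbTE bx) (IH un h).
Qed.

Lemma pairs_nth {T : Type} (x0 : T) s k : k.+1 < size s ->
  nth (x0, x0) (pairs s) k = (nth x0 s k, nth x0 s k.+1) /\ k < size (pairs s).
Proof.
elim: s k => [|x s IH] k //=. case: s IH => [|y s] IH //=.
rewrite /pairs /= in IH *. case: k => [|k] //= hk.
by have [-> h] := IH k hk.
Qed.

Lemma size_pairs {T : Type} (s : seq T) : size (pairs s) = (size s).-1.
Proof. by rewrite /pairs size_zip size_behead; case: s => //= x s; rewrite minnE; lia. Qed.


Definition pp (a : point) (d : nat * nat) : point := (a.1.*2.-1 + d.1, a.2.*2.-1 + d.2).
Definition port (a x : point) : nat :=
  if x == right_of a then 1 else if x == up_of a then 2 else 0.
Definition offs (k : nat) : nat * nat :=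
  if k == 1 then (1,0) else if k == 2 then (0,1) else (0,0).
Definition route (s t : nat) (fl : bool) : seq (nat * nat) :=
  match s, t with
  | 0, 1 => if fl then [:: (0,0); (0,1); (1,1); (1,0)] else [:: (0,0); (1,0)]
  | 1, 0 => if fl then [:: (1,0); (1,1); (0,1); (0,0)] else [:: (1,0); (0,0)]
  | 0, 2 => [:: (0,0); (0,1)]
  | 2, 0 => [:: (0,1); (0,0)]
  | 1, 2 => [:: (1,0); (1,1); (0,1)]
  | 2, 1 => [:: (0,1); (1,1); (1,0)]
  | _, _ => [:: offs s]
  end.

Ltac rcase s t fl := case: s => [|[|[|s]]] //; case: t => [|[|[|t]]] //; case: fl.

Lemma port_le a x : port a x <= 2.
Proof. by rewrite /port; case: ifP => //; case: ifP. Qed.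

Lemma route_head s t fl : s <= 2 -> t <= 2 -> head (0,0) (route s t fl) = offs s.
Proof. by rcase s t fl. Qed.
Lemma route_last s t fl : s <= 2 -> t <= 2 -> (s = t -> s = 0) ->
  last (0,0) (route s t fl) = offs t.
Proof. rcase s t fl => // _ _ H; by have := H erefl. Qed.
Lemma route_nil s t fl : route s t fl != [::].
Proof. by rcase s t fl. Qed.
Lemma route_offs s t fl : all (fun d : nat * nat => (d.1 <= 1) && (d.2 <= 1)) (route s t fl).
Proof. by rcase s t fl. Qed.
Lemma route_uniq s t fl : uniq (route s t fl).
Proof. by rcase s t fl. Qed.
Lemma route_adj s t fl : all (fun p : (nat*nat)*(nat*nat) => gadj p.1 p.2) (pairs (route s t fl)).
Proof. by rcase s t fl. Qed.
Lemma route_nd s t fl : s <= 2 -> t <= 2 -> s != 1 ->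
  all (fun p : (nat*nat)*(nat*nat) => p.1.1 <= p.2.1) (pairs (route s t fl)).
Proof. by rcase s t fl. Qed.
Lemma route_ni s t fl : s <= 2 -> t <= 2 -> t != 1 ->
  all (fun p : (nat*nat)*(nat*nat) => p.2.1 <= p.1.1) (pairs (route s t fl)).
Proof. by rcase s t fl. Qed.
Lemma route_share s t s' t' fl fl' : s <= 1 -> t <= 1 -> s' <= 2 -> t' <= 2 -> s' != 1 -> t' != 1 ->
  all (fun d => ~~ ((d \in pairs (route s' t' fl')) || ((d.2, d.1) \in pairs (route s' t' fl'))))
      (pairs (route s t fl)) || fl.
Proof. by rcase s t fl; case: s' t' => [|[|[|s']]] [|[|[|t']]] //; case: fl'. Qed.
Lemma route_has_v s t : s <= 1 -> t <= 1 -> s != t ->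
  (((0,0),(0,1)) \in pairs (route s t true)) || (((0,1),(0,0)) \in pairs (route s t true)).
Proof. by case: s t => [|[|s]] [|[|t]]. Qed.
Lemma route_has_u s t fl : s <= 2 -> t <= 2 -> s != 1 -> t != 1 -> s != t ->
  (((0,0),(0,1)) \in pairs (route s t fl)) || (((0,1),(0,0)) \in pairs (route s t fl)).
Proof. by case: s t => [|[|[|s]]] [|[|[|t]]] //; case: fl. Qed.

Lemma gadj_pp a d1 d2 : gadj d1 d2 -> gadj (pp a d1) (pp a d2).
Proof. rewrite /gadj /pp /=. lia. Qed.
Lemma pp_inj a b d1 d2 : 0 < a.1 -> 0 < a.2 -> 0 < b.1 -> 0 < b.2 ->
  d1.1 <= 1 -> d1.2 <= 1 -> d2.1 <= 1 -> d2.2 <= 1 -> pp a d1 = pp b d2 -> a = b /\ d1 = d2.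
Proof.
case: a => a1 a2; case: b => b1 b2; case: d1 => x1 y1; case: d2 => x2 y2 /=.
rewrite /pp /= => *. have : a1.*2.-1 + x1 = b1.*2.-1 + x2 by congruence.
have : a2.*2.-1 + y1 = b2.*2.-1 + y2 by congruence.
move=> *. split; congr pair; lia.
Qed.
Lemma offs_le k : (offs k).1 <= 1 /\ (offs k).2 <= 1.
Proof. by rewrite /offs; case: ifP => //; case: ifP. Qed.


Section Ex.
Variable fl : point -> bool.

Definition blk (p a n : point) := map (pp a) (route (port a p) (port a n) (fl a)).
Fixpoint ex (p : point) (L : seq point) : seq point :=
  match L with [::] => [::] | a :: L' => blk p a (head a L') ++ ex a L' end.
Fixpoint wins (p : point) (L : seq point) : seq (point * point * point) :=
  match L with [::] => [::] | a :: L' => (p, a, head a L') :: wins a L' end.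

Lemma blk_nil p a n : blk p a n != [::].
Proof. by rewrite /blk; case E: route (route_nil (port a p) (port a n) (fl a)). Qed.

Lemma blk_head p a n : head (0,0) (blk p a n) = pp a (offs (port a p)).
Proof.
rewrite /blk. have := route_head (fl a) (port_le a p) (port_le a n).
by case: route (route_nil (port a p) (port a n) (fl a)) => //= d r _ ->.
Qed.

Lemma W_mid p L w : w \in wins p L -> w.1.2 \in L.
Proof.
elim: L p => [|a L IH] p //=. rewrite in_cons => /orP [/eqP -> /=|/IH h].
  by rewrite inE eqxx. by rewrite inE h orbT.
Qed.

Lemma W_prev p L w : w \in wins p L ->
  (w.1.1 = p /\ ohead L = Some w.1.2) \/ (w.1.1, w.1.2) \in pairs L.
Proof.
elim: L p => [|a L IH] p //=. rewrite in_cons => /orP [/eqP -> /=|/IH [[-> h]|h]].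
- by left.
- right. case: L {IH} h => [|b L] //= [<-]. by rewrite inE eqxx.
- right. case: L {IH} h => [|b L] //= h. by rewrite inE h orbT.
Qed.

Lemma W_next p L w : w \in wins p L -> w.2 = w.1.2 \/ (w.1.2, w.2) \in pairs L.
Proof.
elim: L p => [|a L IH] p //=. rewrite in_cons => /orP [/eqP -> /=|/IH [h|h]].
- case: L {IH} => [|b L] /=; first by left. by right; rewrite inE eqxx.
- by left.
- right. case: L {IH} h => [|b L] //= h. by rewrite inE h orbT.
Qed.

Lemma W_pair p L a b : (a, b) \in pairs L ->
  (exists q, (q, a, b) \in wins p L) /\ (exists n, (a, b, n) \in wins p L).
Proof.
elim: L p => [|c L IH] p //=. case: L IH => [|d L] IH //=.
rewrite in_cons => /orP [/eqP [-> ->]|h].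
- split; first by exists p; rewrite inE eqxx.
  by exists (head d L); rewrite !inE eqxx orbT.
- have [[q hq] [n hn]] := IH c h. split.
  + by exists q; rewrite in_cons hq orbT.
  + by exists n; rewrite in_cons hn orbT.
Qed.

Lemma ex_sub p L w : w \in wins p L -> {subset pairs (blk w.1.1 w.1.2 w.2) <= pairs (ex p L)}.
Proof.
elim: L p => [|a L IH] p //=. rewrite in_cons => /orP [/eqP -> /=|/IH h] xy hxy.
  by rewrite pairs_cat mem_cat hxy.
by rewrite pairs_cat mem_cat mem_cat (h _ hxy) !orbT.
Qed.

Lemma ex_mem p L x : x \in ex p L ->
  exists a d, [/\ a \in L, d.1 <= 1, d.2 <= 1 & x = pp a d].
Proof.
elim: L p => [|a L IH] p //=. rewrite mem_cat => /orP [|/IH [b [d [h1 h2 h3 h4]]]].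
- rewrite /blk => /mapP [d hd ->]. exists a, d.
  have /allP/(_ d hd)/andP [h1 h2] := route_offs (port a p) (port a (head a L)) (fl a).
  by split => //; rewrite inE eqxx.
- by exists b, d; split => //; rewrite inE h1 orbT.
Qed.

Lemma ex_classify p L xy : xy \in pairs (ex p L) ->
  (exists w d1 d2, [/\ w \in wins p L,
     (d1, d2) \in pairs (route (port w.1.2 w.1.1) (port w.1.2 w.2) (fl w.1.2)) &
     xy = (pp w.1.2 d1, pp w.1.2 d2)]) \/
  (exists q a b, [/\ (q, a, b) \in wins p L, (a, b) \in pairs L &
     xy = (last (0,0) (blk q a b), pp b (offs (port b a)))]).
Proof.
elim: L p => [|a L IH] p //=. rewrite pairs_cat !mem_cat => /orP [|/orP [|]].
- rewrite /blk pairs_map => /mapP [[d1 d2] hd ->]. left.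
  by exists (p, a, head a L), d1, d2; rewrite inE eqxx.
- case E: (blk p a (head a L)) (blk_nil p a (head a L)) => [|z s] // _.
  case: L IH E => [|b L] IH E //=. case E2: (blk a b (head b L)) (blk_nil a b (head b L)) => [|z2 s2] // _.
  rewrite inE => /eqP ->. right. exists p, a, b. split.
  + by rewrite inE eqxx.
  + by rewrite inE eqxx.
  + have := blk_head a b (head b L). rewrite E2 /= => <-.
    by rewrite E.
- move=> /IH [[w [d1 [d2 [h1 h2 h3]]]]|[q [c [b [h1 h2 h3]]]]].
  + by left; exists w, d1, d2; split => //; rewrite inE h1 orbT.
  + right; exists q, c, b; split => //; first by rewrite inE h1 orbT.
    case: L {IH} h1 h2 h3 => [|d L] //= h1 h2 h3. by rewrite inE h2 orbT.
Qed.

Lemma ex_uniq p L : uniq L -> all (fun a : point => (0 < a.1) && (0 < a.2)) L -> uniq (ex p L).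
Proof.
elim: L p => [|a L IH] p //= /andP [an un] /andP [/andP [a1 a2] ap].
rewrite cat_uniq IH // andbT. apply/andP; split.
  by rewrite /blk map_inj_in_uniq ?route_uniq // => d1 d2 h1 h2;
  have /allP/(_ d1 h1)/andP [x1 y1] := route_offs (port a p) (port a (head a L)) (fl a);
  have /allP/(_ d2 h2)/andP [x2 y2] := route_offs (port a p) (port a (head a L)) (fl a);
  move=> /(pp_inj a1 a2 a1 a2 x1 y1 x2 y2) [].
apply/hasPn => x /ex_mem [b [d [hb d1 d2 ->]]]. apply/negP => /mapP [d' hd' e].
have /allP/(_ d' hd')/andP [x1 y1] := route_offs (port a p) (port a (head a L)) (fl a).
have /allP/(_ b hb)/andP [b1 b2] := ap.
have [eb _] := pp_inj b1 b2 a1 a2 d1 d2 x1 y1 e.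
by move: an; rewrite -eb hb.
Qed.

End Ex.


Lemma has_edgeE P p q : has_edge P p q = ((p, q) \in pairs P) || ((q, p) \in pairs P).
Proof.
rewrite /has_edge -/(pairs P). elim: (pairs P) => [|[x y] s IH] //=.
rewrite IH !in_cons !xpair_eqE (eq_sym p x) (eq_sym q y) (eq_sym q x) (eq_sym p y).
by case: (x == p) (y == q) (x == q) (y == p) ((p, q) \in s) ((q, p) \in s) => [] [] [] [] [] [].
Qed.

Lemma port_self a : port a a = 0.
Proof. case: a => a1 a2; rewrite /port /right_of /up_of /= !xpair_eqE; case: ifP; [lia|]; case: ifP => //; lia. Qed.
Lemma port1 a x : port a x = 1 -> x = right_of a.
Proof. by rewrite /port; case: ifP => [/eqP|] //; case: ifP. Qed.
Lemma port2 a x : port a x = 2 -> x = up_of a.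
Proof. by rewrite /port; case: ifP => //; case: ifP => [/eqP|]. Qed.
Lemma port_right a : port a (right_of a) = 1.
Proof. by rewrite /port eqxx. Qed.
Lemma port_up a : port a (up_of a) = 2.
Proof.
rewrite /port eqxx; case: ifP => //; case: a => a1 a2; rewrite /right_of /up_of /= xpair_eqE; lia.
Qed.

Lemma gadj_sym p q : gadj p q = gadj q p.
Proof. rewrite /gadj; case: p => p1 p2; case: q => q1 q2 /=. apply/idP/idP; lia. Qed.
Lemma gadj_irr p : gadj p p = false.
Proof. rewrite /gadj; case: p => p1 p2 /=. apply/negbTE; apply/negP; lia. Qed.

Section Path.
Variable L : seq point.
Hypothesis Lu : uniq L.
Hypothesis Ladj : all (fun ab : point * point => gadj ab.1 ab.2) (pairs L).

Definition hd := head (0,0) L.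

Lemma PWp p a n : (p, a, n) \in wins hd L -> p = a \/ (p, a) \in pairs L.
Proof.
move/W_prev => [[/= -> h]|h]; last by right.
by left; move: h; rewrite /hd; case: L => //= b s [->].
Qed.
Lemma PWn p a n : (p, a, n) \in wins hd L -> n = a \/ (a, n) \in pairs L.
Proof. by move/W_next. Qed.

Lemma pairs_neq x y : (x, y) \in pairs L -> x != y.
Proof. move=> h; have := allP Ladj _ h => /=. by apply: contraTneq => ->; rewrite gadj_irr. Qed.

Lemma no_back x y : (x, y) \in pairs L -> (y, x) \in pairs L -> False.
Proof. move=> h1 h2; have := pairs_index Lu h1; have := pairs_index Lu h2; lia. Qed.

Lemma PW_port p a n k : (p, a, n) \in wins hd L -> (port a p = k \/ port a n = k) -> 0 < k ->
  (k = 1 -> has_edge L a (right_of a)) /\ (k = 2 -> has_edge L a (up_of a)).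
Proof.
move=> hw hk k0.
have H : forall x, x = a \/ (x, a) \in pairs L \/ (a, x) \in pairs L -> port a x = k ->
  (k = 1 -> has_edge L a (right_of a)) /\ (k = 2 -> has_edge L a (up_of a)).
  move=> x [->|hx]; first by rewrite port_self => e; exfalso; lia.
  move=> hp; split => ek; subst k.
  - have ex := port1 ek; subst x. by rewrite has_edgeE; case: hx => ->; rewrite ?orbT.
  - have ex := port2 ek; subst x. by rewrite has_edgeE; case: hx => ->; rewrite ?orbT.
case: hk => hk; apply: (H _ _ hk).
- by case: (PWp hw); [left|right; left].
- by case: (PWn hw); [left|right; right].
Qed.

Lemma PW_eq p a n : (p, a, n) \in wins hd L -> port a p = port a n -> port a p = 0.
Proof.
move=> hw e. case E: (port a p) => [|k] //. exfalso.
have hpn : p = n.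
  move: (port_le a p); rewrite E; case: k E => [|[|k]] E //= _.
  - by rewrite (port1 E) (port1 (esym (etrans (esym E) e))).
  - by rewrite (port2 E) (port2 (esym (etrans (esym E) e))).
subst n.
have pa : p != a by apply/eqP => epa; move: E; rewrite epa port_self.
case: (PWp hw) => [/eqP|h1]; first by rewrite (negbTE pa).
case: (PWn hw) => [epa|h2]; first by move/eqP: pa.
exact: no_back h1 h2.
Qed.

Lemma blk_last fl q a b : (q, a, b) \in wins hd L ->
  last (0,0) (blk fl q a b) = pp a (offs (port a b)).
Proof.
move=> hw. have := route_last (fl a) (port_le a q) (port_le a b) (PW_eq hw).
rewrite /blk; case: route (route_nil (port a q) (port a b) (fl a)) => [|d r] // _ /= <-.
by rewrite last_map.
Qed.

End Path.


Lemma gadj_cases a b : gadj a b ->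
  [\/ b = right_of a, a = right_of b, b = up_of a | a = up_of b].
Proof.
case: a b => [a1 a2] [b1 b2]; rewrite /gadj /right_of /up_of /=.
case/orP => /andP [/eqP e /orP [/eqP e'|/eqP e']]; subst.
- by constructor 4. - by constructor 3. - by constructor 2. - by constructor 1.
Qed.
Lemma port_rb a : port (right_of a) a = 0.
Proof. case: a => a1 a2; rewrite /port /right_of /up_of /= !xpair_eqE; case: ifP; [lia|]; case: ifP => //; lia. Qed.
Lemma port_ub a : port (up_of a) a = 0.
Proof. case: a => a1 a2; rewrite /port /right_of /up_of /= !xpair_eqE; case: ifP; [lia|]; case: ifP => //; lia. Qed.

Lemma junc_adj a b : 0 < a.1 -> 0 < a.2 -> 0 < b.1 -> 0 < b.2 -> gadj a b ->
  gadj (pp a (offs (port a b))) (pp b (offs (port b a))).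
Proof.
move=> ? ? ? ?; case/gadj_cases => e; subst;
  rewrite ?port_right ?port_up ?port_rb ?port_ub;
  try (case: a => a1 a2); try (case: b => b1 b2); simpl in *; rewrite /pp /offs /gadj /right_of /up_of /=; lia.
Qed.
Lemma junc_nd a b : gadj a b -> a.1 <= b.1 ->
  (pp a (offs (port a b))).1 <= (pp b (offs (port b a))).1.
Proof.
case/gadj_cases => e; subst;
  rewrite ?port_right ?port_up ?port_rb ?port_ub;
  try (case: a => a1 a2); try (case: b => b1 b2); simpl in *; rewrite /pp /offs /gadj /right_of /up_of /=; lia.
Qed.
Lemma junc_ni a b : gadj a b -> b.1 <= a.1 ->
  (pp b (offs (port b a))).1 <= (pp a (offs (port a b))).1.
Proof.
case/gadj_cases => e; subst;
  rewrite ?port_right ?port_up ?port_rb ?port_ub;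
  try (case: a => a1 a2); try (case: b => b1 b2); simpl in *; rewrite /pp /offs /gadj /right_of /up_of /=; lia.
Qed.


Definition nd (P : seq point) := all (fun ab : point * point => ab.1.1 <= ab.2.1) (pairs P).
Definition ni (P : seq point) := all (fun ab : point * point => ab.2.1 <= ab.1.1) (pairs P).

Lemma pairs_idx (P : seq point) xy : xy \in pairs P ->
  exists k, k.+1 < size P /\ xy = (nth (0,0) P k, nth (0,0) P k.+1).
Proof.
move=> h. exists (index xy (pairs P)).
have hk : index xy (pairs P) < size (pairs P) by rewrite index_mem.
have hs : (index xy (pairs P)).+1 < size P by move: hk; rewrite size_pairs; lia.
split => //. have [e _] := pairs_nth (0,0) hs. by rewrite -e nth_index.
Qed.

Lemma step_of (P : seq point) (r : point -> point -> bool) k :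
  all (fun ab : point * point => r ab.1 ab.2) (pairs P) -> k.+1 < size P ->
  r (nth (0,0) P k) (nth (0,0) P k.+1).
Proof.
move=> /allP h hk. have [e hk'] := pairs_nth (0,0) hk.
have := h _ (mem_nth ((0,0),(0,0)) hk'). by rewrite e.
Qed.

Lemma mono_nd (X : nat -> nat) n : (forall k, k.+1 < n -> X k <= X k.+1) ->
  forall i j, i <= j -> j < n -> X i <= X j.
Proof.
move=> h i j; elim: j => [|j IH]; first by rewrite leqn0 => /eqP ->.
rewrite leq_eqVlt => /orP [/eqP -> //|hij] hj.
have := h j hj; have := IH hij (ltnW hj); lia.
Qed.
Lemma mono_ni (X : nat -> nat) n : (forall k, k.+1 < n -> X k.+1 <= X k) ->
  forall i j, i <= j -> j < n -> X j <= X i.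
Proof.
move=> h i j; elim: j => [|j IH]; first by rewrite leqn0 => /eqP ->.
rewrite leq_eqVlt => /orP [/eqP -> //|hij] hj.
have := h j hj; have := IH hij (ltnW hj); lia.
Qed.

Lemma xm_nd P : nd P -> x_monotone P.
Proof.
move=> h c i j k hij hjk hk ei ek.
have hs : forall m, m.+1 < size P -> (nth (0,0) P m).1 <= (nth (0,0) P m.+1).1
  by move=> m hm; apply: (step_of (r := fun x y : point => x.1 <= y.1)).
have := mono_nd hs hij (leq_ltn_trans hjk hk).
have := mono_nd hs hjk hk. lia.
Qed.
Lemma xm_ni P : ni P -> x_monotone P.
Proof.
move=> h c i j k hij hjk hk ei ek.
have hs : forall m, m.+1 < size P -> (nth (0,0) P m.+1).1 <= (nth (0,0) P m).1
  by move=> m hm; apply: (step_of (r := fun x y : point => y.1 <= x.1)).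
have := mono_ni hs hij (leq_ltn_trans hjk hk).
have := mono_ni hs hjk hk. lia.
Qed.

Lemma ivt (X : nat -> nat) a b c : a <= b ->
  (forall k, a <= k -> k < b -> X k.+1 <= (X k).+1 /\ X k <= (X k.+1).+1) ->
  (X a <= c <= X b) || (X b <= c <= X a) -> exists i, [/\ a <= i, i <= b & X i = c].
Proof.
elim: b => [|b IH].
  rewrite leqn0 => /eqP -> _ h. exists 0; split => //; lia.
rewrite leq_eqVlt => /orP [/eqP ->|hab] hs hc.
  exists b.+1; split => //; lia.
case: (eqVneq c (X b.+1)) => [->|hne]; first by exists b.+1; split => //; lia.
have [h1 h2] := hs b hab (ltnSn b).
have [i [h3 h4 h5]] := IH hab (fun k hk hk' => hs k hk (ltnW hk')) ltac:(lia).
exists i; split => //; lia.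
Qed.

Lemma mono_split (X : nat -> nat) n :
  (forall k, k.+1 < n -> X k.+1 <= (X k).+1 /\ X k <= (X k.+1).+1) ->
  (forall c i j k, i <= j -> j <= k -> k < n -> X i = c -> X k = c -> X j = c) ->
  forall s t, s.+1 < n -> t.+1 < n -> X s < X s.+1 -> X t.+1 < X t -> False.
Proof.
move=> hs hm s t hsn htn h1 h2.
have st : s != t by apply/eqP => e; subst; lia.
have hs' : forall a b, b < n -> forall k, a <= k -> k < b -> X k.+1 <= (X k).+1 /\ X k <= (X k.+1).+1
  by move=> a b hb k _ hk; apply: hs; lia.
case: (ltngtP s t) st => // [lst|lts] _.
- case: (leqP (X t.+1) (X s)) => hc.
  + have [k [k1 k2 k3]] := @ivt X s.+1 t.+1 (X s) ltac:(lia) (hs' s.+1 t.+1 htn) ltac:(lia).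
    have := hm (X s) s s.+1 k (leqnSn s) k1 ltac:(lia) erefl k3. have := hs s hsn. lia.
  + have [k [k1 k2 k3]] := @ivt X s t (X t.+1) ltac:(lia) (hs' s t ltac:(lia)) ltac:(lia).
    have := hm (X t.+1) k t t.+1 k2 (leqnSn t) htn k3 erefl. have := hs t htn. lia.
- case: (leqP (X t) (X s.+1)) => hc.
  + have [k [k1 k2 k3]] := @ivt X t.+1 s.+1 (X t) ltac:(lia) (hs' t.+1 s.+1 hsn) ltac:(lia).
    have := hm (X t) t t.+1 k (leqnSn t) k1 ltac:(lia) erefl k3. have := hs t htn. lia.
  + have [k [k1 k2 k3]] := @ivt X t s (X s.+1) ltac:(lia) (hs' t s ltac:(lia)) ltac:(lia).
    have := hm (X s.+1) k s s.+1 k2 (leqnSn s) hsn k3 erefl. have := hs s hsn. lia.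
Qed.

Lemma nd_or_ni P : all (fun ab : point * point => gadj ab.1 ab.2) (pairs P) ->
  x_monotone P -> nd P \/ ni P.
Proof.
move=> hadj hm. case: (boolP (nd P)) => [|hnd]; first by left. right.
apply/allP => ab hab; rewrite leqNgt; apply/negP => H.
have [ab' hab' H'] := allPn hnd.
have [s [hs es]] := pairs_idx hab. have [t [ht et]] := pairs_idx hab'.
have hst : forall k, k.+1 < size P -> (nth (0,0) P k.+1).1 <= (nth (0,0) P k).1.+1 /\
     (nth (0,0) P k).1 <= (nth (0,0) P k.+1).1.+1.
  move=> k hk. have := step_of (r := gadj) (k := k) hadj hk.
  case: (nth (0,0) P k) => x1 y1; case: (nth (0,0) P k.+1) => x2 y2.
  rewrite /gadj /=; lia.
apply: (mono_split (X := fun k => (nth (0,0) P k).1) hst hm hs ht).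
- by move: H; rewrite es.
- by move: H'; rewrite et /= -ltnNge.
Qed.


Section PathLemmas.
Variables (w h : nat) (L : seq point) (fl : point -> bool).
Hypothesis HL : grid_path w h L.

Let Lu : uniq L. Proof. by case: HL. Qed.
Let Ladj : all (fun ab : point * point => gadj ab.1 ab.2) (pairs L). Proof. by case: HL. Qed.
Let Lg : all (in_grid w h) L. Proof. by case: HL. Qed.
Lemma Lpos a : a \in L -> 0 < a.1 /\ 0 < a.2.
Proof. move=> ha; have := allP Lg a ha; rewrite /in_grid. by case/andP => /andP [-> _] /andP [-> _]. Qed.

Definition REx := ex fl (hd L) L.

Lemma REx_grid : grid_path (2 * w) (2 * h) REx.
Proof.
split.
- case: HL => + _ _ _. rewrite /REx. case: L => //= a s _.
  by case E: blk (blk_nil fl (hd (a :: s)) a (head a s)).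
- apply: ex_uniq => //. by apply/allP => a /Lpos [-> ->].
- apply/allP => x /ex_mem [a [d [ha d1 d2 ->]]].
  have := allP Lg a ha; rewrite /in_grid /pp /=; lia.
- apply/allP => xy /ex_classify [[t [d1 [d2 [ht hd ->]]]]|[q [a [b [ht hab ->]]]]] /=.
  + apply: gadj_pp. exact: (allP (route_adj _ _ _) _ hd).
  + rewrite (blk_last Lu Ladj fl ht).
    have [ha hb] := pairs_mem hab. have [a1 a2] := Lpos ha. have [b1 b2] := Lpos hb.
    by apply: junc_adj => //; apply: (allP Ladj _ hab).
Qed.

Lemma REx_has q a n d1 d2 : (q, a, n) \in wins (hd L) L ->
  (d1, d2) \in pairs (route (port a q) (port a n) (fl a)) ->
  has_edge REx (pp a d1) (pp a d2).
Proof.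
move=> hw hd. rewrite has_edgeE. apply/orP; left.
apply: (ex_sub hw) => /=. rewrite /blk pairs_map. by apply/mapP; exists (d1, d2).
Qed.

Lemma REx_classify p q : has_edge REx p q ->
  (exists q0 a n d1 d2, [/\ (q0, a, n) \in wins (hd L) L,
     ((d1, d2) \in pairs (route (port a q0) (port a n) (fl a))) ||
     ((d2, d1) \in pairs (route (port a q0) (port a n) (fl a))),
     d1.1 <= 1 /\ d1.2 <= 1, d2.1 <= 1 /\ d2.2 <= 1 & p = pp a d1 /\ q = pp a d2]) \/
  (exists a b o1 o2, [/\ has_edge L a b, o1.1 <= 1 /\ o1.2 <= 1, o2.1 <= 1 /\ o2.2 <= 1 &
     p = pp a o1 /\ q = pp b o2]).
Proof.
have off : forall s t f d, d \in route s t f -> d.1 <= 1 /\ d.2 <= 1.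
  by move=> s t f d hd; have /andP [] := allP (route_offs s t f) d hd.
rewrite has_edgeE => /orP [] /ex_classify [[t [d1 [d2 [ht hd e]]]]|[q0 [a [b [ht hab e]]]]].
- left. case: t ht hd e => [[q0 a] n] ht hd [-> ->] /=. exists q0, a, n, d1, d2.
  have [h1 h2] := pairs_mem hd. by split => //; [rewrite hd|apply: off h1|apply: off h2].
- right. rewrite (blk_last Lu Ladj fl ht) in e. case: e => -> ->.
  exists a, b, (offs (port a b)), (offs (port b a)); split => //; try exact: offs_le.
  by rewrite has_edgeE hab.
- left. case: t ht hd e => [[q0 a] n] ht hd [-> ->] /=. exists q0, a, n, d2, d1.
  have [h1 h2] := pairs_mem hd. by split => //; [rewrite hd orbT|apply: off h2|apply: off h1].
- right. rewrite (blk_last Lu Ladj fl ht) in e. case: e => -> ->.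
  exists b, a, (offs (port b a)), (offs (port a b)); split => //; try exact: offs_le.
  by rewrite has_edgeE hab orbT.
Qed.

Lemma REx_nd : nd L -> nd REx.
Proof.
move=> hn. apply/allP => xy /ex_classify [[t [d1 [d2 [ht hd ->]]]]|[q [a [b [ht hab ->]]]]] /=.
- case: t ht hd => [[q0 a] n] ht hd /=.
  have hs : port a q0 != 1.
    apply/eqP => /port1 e; subst q0. case: (PWp ht) => [e|hp].
    + by move: e; case: a {ht hd} => a1 a2 [] /=; lia.
    + by have := allP hn _ hp => /=; lia.
  have := allP (route_nd (fl a) (port_le a q0) (port_le a n) hs) _ hd.
  by rewrite /pp /=; lia.
- rewrite (blk_last Lu Ladj fl ht). apply: junc_nd. exact: (allP Ladj _ hab). exact: (allP hn _ hab).
Qed.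

Lemma REx_ni : ni L -> ni REx.
Proof.
move=> hn. apply/allP => xy /ex_classify [[t [d1 [d2 [ht hd ->]]]]|[q [a [b [ht hab ->]]]]] /=.
- case: t ht hd => [[q0 a] n] ht hd /=.
  have hs : port a n != 1.
    apply/eqP => /port1 e; subst n. case: (PWn ht) => [e|hp].
    + by move: e; case: a {ht hd} => a1 a2 [] /=; lia.
    + by have := allP hn _ hp => /=; lia.
  have := allP (route_ni (fl a) (port_le a q0) (port_le a n) hs) _ hd.
  by rewrite /pp /=; lia.
- rewrite (blk_last Lu Ladj fl ht). apply: junc_ni. exact: (allP Ladj _ hab). exact: (allP hn _ hab).
Qed.

Lemma win_of_edge a x : has_edge L a x ->
  exists q n, (q, a, n) \in wins (hd L) L /\ (q = x \/ n = x).
Proof.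
rewrite has_edgeE => /orP [] hh.
- have [[q hq] _] := W_pair (hd L) hh. by exists q, x; split => //; right.
- have [_ [n hn]] := W_pair (hd L) hh. by exists x, n; split => //; left.
Qed.

End PathLemmas.


Lemma has_edge_sym P p q : has_edge P p q = has_edge P q p.
Proof. by rewrite !has_edgeE orbC. Qed.

Lemma edge_mem P a b : has_edge P a b -> a \in P /\ b \in P.
Proof. rewrite has_edgeE => /orP [] /pairs_mem [h1 h2] //. Qed.

Lemma edge_gadj w h P a b : grid_path w h P -> has_edge P a b -> gadj a b.
Proof.
case=> _ _ _ hadj. rewrite has_edgeE => /orP [] hp; have := allP hadj _ hp => //=.
by rewrite gadj_sym.
Qed.

Lemma gadj_right a : gadj a (right_of a).
Proof. by rewrite /gadj /right_of /= !eqxx !orbT. Qed.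
Lemma gadj_up a : gadj a (up_of a).
Proof. by rewrite /gadj /up_of /= !eqxx !orbT. Qed.

Lemma le1 k : k <= 2 -> k != 2 -> k <= 1.
Proof. lia. Qed.

Section Main.
Variables (V : finType) (w h : nat) (RV : V -> seq point).
Hypothesis Hg : forall v, grid_path w h (RV v).
Hypothesis Pa : forall v u, v != u -> forall p q : point, gadj p q ->
       ~ (has_edge (RV v) p q /\ has_edge (RV u) p q).
Hypothesis Pb : forall v u, v != u -> forall p : point, p \in RV v -> p \in RV u ->
       (has_edge (RV v) p (right_of p) && has_edge (RV u) p (up_of p)) \/
       (has_edge (RV v) p (up_of p) && has_edge (RV u) p (right_of p)).
Variables (V' : finType) (e' : rel V') (f : V' -> V).
Hypothesis finj : injective f.
Hypothesis e'sym : symmetric e'.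

Lemma noRR x y a : x != y -> has_edge (RV x) a (right_of a) -> has_edge (RV y) a (right_of a) -> False.
Proof. move=> hxy h1 h2; exact: (Pa hxy (gadj_right a) (conj h1 h2)). Qed.
Lemma noUU x y a : x != y -> has_edge (RV x) a (up_of a) -> has_edge (RV y) a (up_of a) -> False.
Proof. move=> hxy h1 h2; exact: (Pa hxy (gadj_up a) (conj h1 h2)). Qed.

Lemma three x y z a : x != y -> x != z -> y != z ->
  a \in RV x -> a \in RV y -> a \in RV z -> False.
Proof.
move=> hxy hxz hyz hx hy hz.
have hyx : y != x by rewrite eq_sym. have hzx : z != x by rewrite eq_sym.
have hzy : z != y by rewrite eq_sym.
case: (Pb hxy hx hy) => /andP [h1 h2]; case: (Pb hxz hx hz) => /andP [h3 h4];
  case: (Pb hyz hy hz) => /andP [h5 h6];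
  match goal with
  | H1 : is_true (has_edge (RV ?x) a (right_of a)), H2 : is_true (has_edge (RV ?y) a (right_of a)),
    Hn : is_true (?x != ?y) |- _ => exact: (noRR Hn H1 H2)
  | H1 : is_true (has_edge (RV ?x) a (up_of a)), H2 : is_true (has_edge (RV ?y) a (up_of a)),
    Hn : is_true (?x != ?y) |- _ => exact: (noUU Hn H1 H2)
  end.
Qed.

Definition flg (v' : V') (a : point) : bool :=
  [exists u, (u != v') && (a \in RV (f u)) && e' v' u].
Definition RE (v' : V') := REx (RV (f v')) (flg v').

Lemma fneq x y : x != y -> f x != f y.
Proof. by apply: contraNneq => /finj ->. Qed.

Lemma fwd x y a : x != y -> e' x y -> a \in RV (f y) ->
  has_edge (RV (f x)) a (right_of a) -> has_edge (RV (f y)) a (up_of a) ->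
  share_edge (RE x) (RE y).
Proof.
move=> hxy exy hay Rx Uy. have fxy := fneq hxy.
have fyx : f y != f x by rewrite eq_sym.
have Lux : uniq (RV (f x)) by case: (Hg (f x)).
have Lax : all (fun ab : point * point => gadj ab.1 ab.2) (pairs (RV (f x))) by case: (Hg (f x)).
have Luy : uniq (RV (f y)) by case: (Hg (f y)).
have Lay : all (fun ab : point * point => gadj ab.1 ab.2) (pairs (RV (f y))) by case: (Hg (f y)).
have fl : flg x a by apply/existsP; exists y; rewrite exy hay eq_sym hxy.
exists (pp a (0,0)), (pp a (0,1)); split; first exact: gadj_pp.
- have [q [n [hw hqn]]] := win_of_edge Rx.
  have h1 : port a q = 1 \/ port a n = 1 by case: hqn => ->; [left|right]; exact: port_right.
  have n2 : forall k, (port a q = k \/ port a n = k) -> k != 2.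
    move=> k hk; apply/eqP => ek; subst k.
    have [_ H] := PW_port Lux Lax hw hk erefl. exact: (noUU fxy (H erefl) Uy).
  have nq2 := n2 _ (or_introl erefl). have nn2 := n2 _ (or_intror erefl).
  have hne : port a q != port a n.
    apply/eqP => e. have z := PW_eq Lux Lax hw e.
    by case: h1 => h1; [rewrite z in h1|rewrite -e z in h1].
  have := route_has_v (le1 (port_le a q) nq2) (le1 (port_le a n) nn2) hne.
  rewrite -fl => H.
  case/orP: H => H; first exact: (REx_has hw H).
  by rewrite has_edge_sym; exact: (REx_has hw H).
- have [q [n [hw hqn]]] := win_of_edge Uy.
  have h1 : port a q = 2 \/ port a n = 2 by case: hqn => ->; [left|right]; exact: port_up.
  have n1 : forall k, (port a q = k \/ port a n = k) -> k != 1.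
    move=> k hk; apply/eqP => ek; subst k.
    have [H _] := PW_port Luy Lay hw hk erefl. exact: (noRR fxy Rx (H erefl)).
  have nq1 := n1 _ (or_introl erefl). have nn1 := n1 _ (or_intror erefl).
  have hne : port a q != port a n.
    apply/eqP => e. have z := PW_eq Luy Lay hw e.
    by case: h1 => h1; [rewrite z in h1|rewrite -e z in h1].
  have := route_has_u (flg y a) (port_le a q) (port_le a n) nq1 nn1 hne.
  case/orP => H; first exact: (REx_has hw H).
  by rewrite has_edge_sym; exact: (REx_has hw H).
Qed.

Lemma bwd_inner x y a q0 n0 q1 n1 d1 d2 : x != y ->
  a \in RV (f x) -> a \in RV (f y) ->
  has_edge (RV (f x)) a (right_of a) -> has_edge (RV (f y)) a (up_of a) ->
  (q0, a, n0) \in wins (hd (RV (f x))) (RV (f x)) ->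
  (q1, a, n1) \in wins (hd (RV (f y))) (RV (f y)) ->
  ((d1, d2) \in pairs (route (port a q0) (port a n0) (flg x a))) ||
  ((d2, d1) \in pairs (route (port a q0) (port a n0) (flg x a))) ->
  ((d1, d2) \in pairs (route (port a q1) (port a n1) (flg y a))) ||
  ((d2, d1) \in pairs (route (port a q1) (port a n1) (flg y a))) ->
  e' x y.
Proof.
move=> hxy hax hay Rx Uy hw0 hw1 hr0 hr1. have fxy := fneq hxy.
have Lux : uniq (RV (f x)) by case: (Hg (f x)).
have Lax : all (fun ab : point * point => gadj ab.1 ab.2) (pairs (RV (f x))) by case: (Hg (f x)).
have Luy : uniq (RV (f y)) by case: (Hg (f y)).
have Lay : all (fun ab : point * point => gadj ab.1 ab.2) (pairs (RV (f y))) by case: (Hg (f y)).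
have nx2 : forall k, (port a q0 = k \/ port a n0 = k) -> k != 2.
  move=> k hk; apply/eqP => ek; subst k.
  have [_ H] := PW_port Lux Lax hw0 hk erefl. exact: (noUU fxy (H erefl) Uy).
have ny1 : forall k, (port a q1 = k \/ port a n1 = k) -> k != 1.
  move=> k hk; apply/eqP => ek; subst k.
  have [H _] := PW_port Luy Lay hw1 hk erefl. exact: (noRR fxy Rx (H erefl)).
have H := route_share (flg x a) (flg y a) (le1 (port_le a q0) (nx2 _ (or_introl erefl))) (le1 (port_le a n0) (nx2 _ (or_intror erefl)))
  (port_le a q1) (port_le a n1) (ny1 _ (or_introl erefl)) (ny1 _ (or_intror erefl)).
case/orP: H => [/allP H|].
- exfalso. case/orP: hr0 => h0.
  + by have := H _ h0; rewrite /= hr1.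
  + by have := H _ h0; rewrite /= orbC hr1.
- case/existsP => z /andP [/andP [hzx haz] exz].
  case: (eqVneq z y) => [<- //|hzy].
  exfalso. apply: (three fxy (fneq (y := z) _) (fneq (x := y) (y := z) _) hax hay haz).
  by rewrite eq_sym. by rewrite eq_sym.
Qed.

Lemma edges v u : v != u -> e' v u -> (exists a, [/\ a \in RV (f v), a \in RV (f u) &
   ((has_edge (RV (f v)) a (right_of a) && has_edge (RV (f u)) a (up_of a)) \/
    (has_edge (RV (f v)) a (up_of a) && has_edge (RV (f u)) a (right_of a)))]) ->
   share_edge (RE v) (RE u).
Proof.
move=> hvu evu [a [hav hau [/andP [h1 h2]|/andP [h1 h2]]]].
- exact: (fwd hvu evu hau h1 h2).
- have [p [q [g H1 H2]]] := fwd (x := u) (y := v) (a := a) ltac:(by rewrite eq_sym) ltac:(by rewrite e'sym) hav h2 h1.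
  by exists p, q; split.
Qed.

Lemma bwd v u : v != u -> share_edge (RE v) (RE u) -> e' v u.
Proof.
move=> hvu [p [q [g hv hu]]]. have fvu := fneq hvu.
have Hv := Hg (f v); have Hu := Hg (f u).
case: (REx_classify Hv hv) => [[q0 [a [n0 [d1 [d2 [hw0 hr0 [o11 o12] [o21 o22] [ep eq]]]]]]]|[b [c [o1 [o2 [hbc [o11 o12] [o21 o22] [ep eq]]]]]]];
case: (REx_classify Hu hu) => [[q1 [a' [n1 [d1' [d2' [hw1 hr1 [o11' o12'] [o21' o22'] [ep' eq']]]]]]]|[b' [c' [o1' [o2' [hbc' [o11' o12'] [o21' o22'] [ep' eq']]]]]]].
- have hax : a \in RV (f v) := W_mid hw0. have hay : a' \in RV (f u) := W_mid hw1.
  have [a1 a2] := Lpos Hv hax; have [a1' a2'] := Lpos Hu hay.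
  have [ea ed1] := pp_inj a1 a2 a1' a2' o11 o12 o11' o12' (etrans (esym ep) ep').
  have [_ ed2] := pp_inj a1 a2 a1' a2' o21 o22 o21' o22' (etrans (esym eq) eq').
  subst a' d1' d2'.
  case: (Pb fvu hax hay) => /andP [h1 h2].
  + exact: (bwd_inner hvu hax hay h1 h2 hw0 hw1 hr0 hr1).
  + rewrite e'sym. exact: (bwd_inner (x := u) (y := v) ltac:(by rewrite eq_sym) hay hax h2 h1 hw1 hw0 hr1 hr0).
- exfalso. have hax : a \in RV (f v) := W_mid hw0. have [a1 a2] := Lpos Hv hax.
  have [hb hc] := edge_mem hbc'. have [b1 b2] := Lpos Hu hb. have [c1 c2] := Lpos Hu hc.
  have [eb _] := pp_inj a1 a2 b1 b2 o11 o12 o11' o12' (etrans (esym ep) ep').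
  have [ec _] := pp_inj a1 a2 c1 c2 o21 o22 o21' o22' (etrans (esym eq) eq').
  have := edge_gadj Hu hbc'. by rewrite -eb -ec gadj_irr.
- exfalso. have hay : a' \in RV (f u) := W_mid hw1. have [a1 a2] := Lpos Hu hay.
  have [hb hc] := edge_mem hbc. have [b1 b2] := Lpos Hv hb. have [c1 c2] := Lpos Hv hc.
  have [eb _] := pp_inj a1 a2 b1 b2 o11' o12' o11 o12 (etrans (esym ep') ep).
  have [ec _] := pp_inj a1 a2 c1 c2 o21' o22' o21 o22 (etrans (esym eq') eq).
  have := edge_gadj Hv hbc. by rewrite -eb -ec gadj_irr.
- exfalso.
  have [hb hc] := edge_mem hbc. have [b1 b2] := Lpos Hv hb. have [c1 c2] := Lpos Hv hc.
  have [hb' hc'] := edge_mem hbc'. have [b1' b2'] := Lpos Hu hb'. have [c1' c2'] := Lpos Hu hc'.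
  have [eb _] := pp_inj b1 b2 b1' b2' o11 o12 o11' o12' (etrans (esym ep) ep').
  have [ec _] := pp_inj c1 c2 c1' c2' o21 o22 o21' o22' (etrans (esym eq) eq').
  subst b' c'. exact: (Pa fvu (edge_gadj Hv hbc) (conj hbc hbc')).
Qed.

End Main.

Unset Implicit Arguments.
Theorem lemma1 (V : finType) (e : rel V) (w h : nat) (RV : V -> seq point) :
  symmetric e -> irreflexive e ->
  VPG_rep w h e RV -> proper_VPG RV ->
  forall (V' : finType) (e' : rel V') (f : V' -> V),
    injective f -> symmetric e' -> irreflexive e' ->
    (forall x y, e' x y -> e (f x) (f y)) ->
    exists RE : V' -> seq point,
      EPG_rep (2 * w) (2 * h) e' RE /\
      ((forall v, x_monotone (RV v)) -> forall v', x_monotone (RE v')).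
Proof.
move=> _ _ [Hg He] [Pa Pb] V' e' f finj e'sym _ He'.
exists (RE RV e' f). split; first split.
- move=> v; exact: REx_grid.
- move=> v u hvu; split.
  + move=> evu. apply: (edges Hg Pa finj e'sym hvu evu).
    have fvu := fneq finj hvu.
    have [H _] := He (f v) (f u) fvu. have [a [h1 h2]] := H (He' _ _ evu).
    by exists a; split => //; exact: Pb.
  + exact: (bwd Hg Pa Pb finj e'sym hvu).
- move=> hm v. have Hv := Hg (f v).
  have hadj : all (fun ab : point * point => gadj ab.1 ab.2) (pairs (RV (f v))) by case: Hv.
  case: (nd_or_ni hadj (hm (f v))) => H.
  + apply: xm_nd; exact: REx_nd.
  + apply: xm_ni; exact: REx_ni.
Qed.
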